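(* Let $N\in\mathbb{N}$, $a\ge0$, $b>0$, $\alpha:=a+b-1$, $\beta:=b-1$, and let $z_1\le\dots\le z_N$ be the ordered zeros of the Jacobi polynomial $P_N^{(\alpha,\beta)}$. Let $\tilde S=(\tilde s_{i,j})_{i,j=1,\dots,N}$ be the matrix with $$\tilde s_{j,j}=4\sum_{l\ne j}\frac{1-z_j^2}{(z_j-z_l)^2}+2(a+b)\frac{1+z_j}{1-z_j}+2b\frac{1-z_j}{1+z_j},\qquad \tilde s_{i,j}=\frac{-4\sqrt{(1-z_j^2)(1-z_i^2)}}{(z_i-z_j)^2}\ (i\ne j).$$ Then $v_1:=(\sqrt{1-z_1^2},\dots,\sqrt{1-z_N^2})^T$ is an eigenvector of $\tilde S$ with eigenvalue $\lambda_1=2(2N+\alpha+\beta)$.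
   Context: $P_N^{(\alpha,\beta)}$ denotes the classical Jacobi polynomial of degree $N$, orthogonal on $]-1,1[$ with respect to the weight $(1-x)^\alpha(1+x)^\beta$; its zeros are simple and lie in $]-1,1[$. *)

(* Defs.v *)
From HB Require Import structures.
From mathcomp Require Import all_boot all_order all_algebra.
From mathcomp Require Import reals.
Set Implicit Arguments. Unset Strict Implicit. Unset Printing Implicit Defensive.
Import Order.TTheory GRing.Theory Num.Theory.
Local Open Scope ring_scope.

Definition gbinom {R : realType} (x : R) (k : nat) : R :=
  (\prod_(i < k) (x - i%:R)) / (k`!)%:R.

Definition jacobi {R : realType} (N : nat) (al be : R) : {poly R} :=
  \sum_(k < N.+1)
     (gbinom (N%:R + al) (N - k) * gbinom (N%:R + be) k) *:
       (((2^-1) *: ('X - 1)) ^+ k * ((2^-1) *: ('X + 1)) ^+ (N - k)).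

Definition Stilde {R : realType} (N : nat) (a b : R) (z : 'I_N -> R) : 'M[R]_N :=
  \matrix_(i < N, j < N)
    if i == j then
      4 * (\sum_(l < N | l != j) (1 - z j ^+ 2) / (z j - z l) ^+ 2)
      + 2 * (a + b) * (1 + z j) / (1 - z j)
      + 2 * b * (1 - z j) / (1 + z j)
    else
      - 4 * Num.sqrt ((1 - z j ^+ 2) * (1 - z i ^+ 2)) / (z i - z j) ^+ 2.

Definition v1 {R : realType} (N : nat) (z : 'I_N -> R) : 'cV[R]_N :=
  \col_(i < N) Num.sqrt (1 - z i ^+ 2).

(* Main.v *)
Require Import Defs.
From HB Require Import structures.
From mathcomp Require Import all_boot all_order all_algebra.
From mathcomp Require Import reals ring lra zify.
Import Order.TTheory GRing.Theory Num.Theory.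
Local Open Scope ring_scope.
Set Implicit Arguments. Unset Strict Implicit.

Section S.
Variable R : realType.
Implicit Types p q : {poly R}.

Lemma d1 : (1 : {poly R})^`() = 0.
Proof. by rewrite -polyC1 derivC. Qed.
Lemma dXm1 : (('X - 1 : {poly R}))^`() = 1.
Proof. by rewrite derivB derivX d1 subr0. Qed.
Lemma dXp1 : (('X + 1 : {poly R}))^`() = 1.
Proof. by rewrite derivD derivX d1 addr0. Qed.

Lemma F1 k m : let f := ('X - 1)^+k * ('X + 1)^+m : {poly R} in
  ('X - 1) * ('X + 1) * f^`() = (k%:R * ('X + 1) + m%:R * ('X - 1)) * f.
Proof.
rewrite /= derivM !deriv_exp dXm1 dXp1 !mul1r.
case: k => [|k]; case: m => [|m] /=; rewrite ?mulr0n ?expr0; try ring.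
all: rewrite ?exprS; ring.
Qed.

Lemma dn k : (k%:R : {poly R})^`() = 0.
Proof. by rewrite derivMn d1 mul0rn. Qed.

Lemma F2g k m (al be : R) (f : {poly R}) :
  ('X - 1) * ('X + 1) * f^`() = (k%:R * ('X + 1) + m%:R * ('X - 1)) * f ->
  ('X - 1) * ('X + 1) * (- (('X - 1) * ('X + 1)) * f^`()^`()
     - ((be + 1)%:P * ('X - 1) + (al + 1)%:P * ('X + 1)) * f^`()
     + ((k + m)%:R * ((k + m)%:R + al + be + 1))%:P * f)
  = - 2%:P * ((k%:R * (k%:R + al))%:P * ('X + 1) - (m%:R * (m%:R + be))%:P * ('X - 1)) * f.
Proof.
move=> h1.
have h2 := congr1 deriv h1.
rewrite !derivM dXm1 dXp1 derivD !derivM !dn dXm1 dXp1 in h2.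
pose e1 := ('X - 1) * ('X + 1) * f^`() - (k%:R * ('X + 1) + m%:R * ('X - 1)) * f.
have E1 : e1 = 0 by rewrite /e1 h1 subrr.
pose e2 := (1 * ('X + 1) + ('X - 1) * 1) * f^`() + ('X - 1) * ('X + 1) * f^`()^`()
   - ((0 * ('X + 1) + k%:R * 1 + (0 * ('X - 1) + m%:R * 1)) * f +
     (k%:R * ('X + 1) + m%:R * ('X - 1)) * f^`()).
have E2 : e2 = 0 by rewrite /e2 h2 subrr.
apply/eqP; rewrite -subr_eq0; apply/eqP.
transitivity (- (('X - 1) * ('X + 1)) * e2 + (('X - 1) + ('X + 1) - (k%:R * ('X + 1) + m%:R * ('X - 1)) - ((be + 1)%:P * ('X - 1) + (al + 1)%:P * ('X + 1))) * e1); last by rewrite E1 E2 !mulr0 addr0.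
rewrite /e1 /e2.
rewrite natrD; rewrite !rmorphD !rmorphM !rmorphD /= !rmorph_nat !rmorph1.
ring.
Qed.

Lemma gbinomS (x : R) j : gbinom x j.+1 * j.+1%:R = gbinom x j * (x - j%:R).
Proof.
rewrite /gbinom big_ord_recr /= factS natrM.
have h1 : (j.+1%:R : R) != 0 by rewrite pnatr_eq0.
have h2 : ((j`!)%:R : R) != 0 by rewrite pnatr_eq0 -lt0n fact_gt0.
field. by rewrite h2 nat1r h1.
Qed.

Definition cc (N : nat) (al be : R) k := gbinom (N%:R + al) (N - k) * gbinom (N%:R + be) k.

Lemma ccS N al be k : (k < N)%N ->
  cc N al be k.+1 * (k.+1%:R * (k.+1%:R + al)) = cc N al be k * ((N - k)%:R * ((N - k)%:R + be)).
Proof.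
move=> kN; rewrite /cc.
have e : (N - k = (N - k.+1).+1)%N by rewrite subnSK.
rewrite e.
set j := (N - k.+1)%N.
have hN : (N%:R : R) = j%:R + k%:R + 1.
  by rewrite -natrD natr1; congr (_%:R); rewrite /j; lia.
have g1 := gbinomS (N%:R + al) j.
have g2 := gbinomS (N%:R + be) k.
have -> : gbinom (N%:R + al) j * gbinom (N%:R + be) k.+1 * (k.+1%:R * (k.+1%:R + al))
   = gbinom (N%:R + al) j * (gbinom (N%:R + be) k.+1 * k.+1%:R) * (k.+1%:R + al) by ring.
have -> : gbinom (N%:R + al) j.+1 * gbinom (N%:R + be) k * (j.+1%:R * (j.+1%:R + be))
   = (gbinom (N%:R + al) j.+1 * j.+1%:R) * gbinom (N%:R + be) k * (j.+1%:R + be) by ring.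
rewrite g1 g2 hN -!natr1. ring.
Qed.

Definition Qp N al be : {poly R} :=
  \sum_(k < N.+1) cc N al be k *: (('X - 1)^+k * ('X + 1)^+(N - k)).

Definition Lop (al be : R) (n : nat) (p : {poly R}) :=
  ('X - 1) * ('X + 1) * (- (('X - 1) * ('X + 1)) * p^`()^`()
     - ((be + 1)%:P * ('X - 1) + (al + 1)%:P * ('X + 1)) * p^`()
     + (n%:R * (n%:R + al + be + 1))%:P * p).

Lemma LopD al be n : {morph Lop al be n : p q / p + q}.
Proof. move=> p q; rewrite /Lop !derivD; ring. Qed.
Lemma Lop0 al be n : Lop al be n 0 = 0.
Proof. rewrite /Lop !derivC; ring. Qed.
Lemma LopZ al be n c p : Lop al be n (c *: p) = c *: Lop al be n p.
Proof. rewrite /Lop !derivZ -!mul_polyC; ring. Qed.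

Lemma ODE N al be : Lop al be N (Qp N al be) = 0.
Proof.
rewrite /Qp (big_morph (Lop al be N) (LopD al be N) (Lop0 al be N)).
transitivity ((-2 : R) *: (\sum_(k < N.+1)
   ((cc N al be k * (k%:R * (k%:R + al))) *: (('X + 1) * (('X - 1)^+k * ('X + 1)^+(N - k))))
  - \sum_(k < N.+1) ((cc N al be k * ((N - k)%:R * ((N - k)%:R + be))) *: (('X - 1) * (('X - 1)^+k * ('X + 1)^+(N - k)))))).
  rewrite -sumrB scaler_sumr; apply: eq_bigr => k _.
  rewrite LopZ.
  have kN : (k + (N - k) = N)%N by rewrite subnKC // -ltnS.
  have := @F2g k (N - k) al be _ (F1 k (N - k)).
  rewrite kN /Lop => ->.
  rewrite -!mul_polyC !polyCM !polyCD !polyCN.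
  rewrite -[2%:P]/((2 : R)%:P) !polyC_natr. ring.
apply/eqP; rewrite scaler_eq0; apply/orP; right; rewrite subr_eq0; apply/eqP.
rewrite big_ord_recl big_ord_recr /= mul0r mulr0 scale0r add0r subnn mul0r mulr0 scale0r addr0.
apply: eq_bigr => i _.
rewrite /bump /= add1n.
have iN : (i < N)%N by [].
rewrite ccS //.
congr (_ *: _).
rewrite exprS -(subnSK iN) exprS. ring.
Qed.

Lemma jacobiE N al be : jacobi N al be = (2^-1)^+N *: Qp N al be.
Proof.
rewrite /jacobi /Qp scaler_sumr; apply: eq_bigr => k _.
rewrite !exprZn -scalerAl -scalerAr !scalerA; congr (_ *: _).
rewrite -mulrA -exprD subnKC; first by rewrite mulrC.
by rewrite -ltnS.
Qed.

Lemma gbinom0 x : gbinom x 0 = 1 :> R.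
Proof. by rewrite /gbinom big_ord0 fact0 divr1. Qed.

Lemma gbinom_gt0 (x : R) n : (n%:R - 1 < x) -> 0 < gbinom x n.
Proof.
move=> hx; rewrite /gbinom divr_gt0 //; last by rewrite ltr0n fact_gt0.
rewrite prodr_gt0 // => i _.
rewrite subr_gt0; apply: le_lt_trans hx.
have := ltn_ord i; rewrite -ltnS => /ltnSE hi.
by rewrite lerBrDr natr1 ler_nat.
Qed.

Lemma hu x : ('X - 1 : {poly R}).[x] = x - 1.
Proof. by rewrite !hornerE. Qed.
Lemma hv x : ('X + 1 : {poly R}).[x] = x + 1.
Proof. by rewrite !hornerE. Qed.

Lemma Qp1 N al be : (Qp N al be).[1] = cc N al be 0 * 2^+N.
Proof.
rewrite /Qp horner_sum big_ord_recl /= big1 ?addr0.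
  by rewrite hornerZ hornerM !horner_exp hu hv subrr expr0 mul1r subn0.
move=> i _; rewrite hornerZ hornerM !horner_exp hu subrr.
by rewrite /bump /= add1n expr0n /= mul0r mulr0.
Qed.

Lemma Qp_size N al be : (size (Qp N al be) <= N.+1)%N.
Proof.
rewrite /Qp; apply: (big_ind (fun p : {poly R} => (size p <= N.+1)%N)).
- by rewrite size_poly0.
- by move=> p q hp hq; apply: leq_trans (size_add _ _) _; rewrite geq_max hp hq.
move=> k _; apply: leq_trans (size_scale_leq _ _) _.
apply: leq_trans (size_mul_leq _ _) _.
have e1 : ('X - 1 : {poly R}) = 'X - 1%:P by rewrite polyC1.
have e2 : ('X + 1 : {poly R}) = 'X - (-1)%:P by rewrite polyCN opprK polyC1.
rewrite e1 e2 !size_exp_XsubC addSn /= addnS /= subnKC //.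
by rewrite -ltnS.
Qed.

Lemma dprod (I : Type) (r : seq I) (P : pred I) (F : I -> R) (x : R) :
  (forall i, P i -> x != F i) ->
  (\prod_(i <- r | P i) ('X - (F i)%:P))^`().[x]
   = (\prod_(i <- r | P i) (x - F i)) * \sum_(i <- r | P i) (x - F i)^-1.
Proof.
move=> hP; elim: r => [|i r IH].
  by rewrite !big_nil -polyC1 derivC horner0 mulr0.
rewrite !big_cons; case: ifP => Pi //.
rewrite derivM derivXsubC hornerD !hornerM IH hornerXsubC horner_prod hornerC mul1r (eq_bigr (fun j => x - F j) (fun j _ => hornerXsubC (F j) x)).
have h := hP i Pi; rewrite -subr_eq0 in h.
field.
by rewrite h.
Qed.

Lemma stieltjes N (Q : {poly R}) (z : 'I_N -> R) j :
  Q != 0 -> (size Q <= N.+1)%N -> (forall i, root Q (z i)) ->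
  (forall i k, i != k -> z i != z k) ->
  exists c, c * \prod_(i < N | i != j) (z j - z i) != 0 /\
    Q^`().[z j] = c * \prod_(i < N | i != j) (z j - z i) /\
    Q^`()^`().[z j] = 2 * (c * \prod_(i < N | i != j) (z j - z i))
                      * \sum_(i < N | i != j) (z j - z i)^-1.
Proof.
move=> Qnz Qs Qr zi.
have zinj : injective z.
  move=> i k e; apply/eqP; apply: contraTT (eqxx (z i)) => ne.
  by rewrite [X in _ == X]e zi.
have [q eq] : exists q, Q = q * \prod_(x <- map z (index_enum 'I_N)) ('X - x%:P).
  apply: uniq_roots_prod_XsubC.
    by apply/allP => x /mapP [i _ ->].
  by rewrite uniq_rootsE map_inj_uniq // index_enum_uniq.
rewrite big_map in eq.
have qnz : q != 0 by apply: contraNneq Qnz => q0; rewrite eq q0 mul0r.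
have sq : (size q <= 1)%N.
  move: Qs; rewrite eq size_Mmonic ?monic_prod_XsubC // size_prod_XsubC.
  rewrite /index_enum -enumT size_enum_ord addnS /=.
  lia.
set c := q`_0.
have qc : q = c%:P by apply: size1_polyC.
have cnz : c != 0 by apply: contraNneq qnz => c0; rewrite qc c0.
set Rj := \prod_(i < N | i != j) ('X - (z i)%:P).
have eQ : Q = c%:P * (('X - (z j)%:P) * Rj) by rewrite eq qc (bigD1 j).
have Rjz : Rj.[z j] = \prod_(i < N | i != j) (z j - z i).
  by rewrite /Rj horner_prod; apply: eq_bigr => i _; rewrite hornerXsubC.
have Rjd : Rj^`().[z j] = Rj.[z j] * \sum_(i < N | i != j) (z j - z i)^-1.
  by rewrite Rjz /Rj dprod // => i ij; rewrite zi // eq_sym.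
have dQ : Q^`() = c%:P * (Rj + ('X - (z j)%:P) * Rj^`()).
  by rewrite eQ derivM derivC mul0r add0r derivM derivXsubC mul1r.
exists c; split; last split.
- rewrite mulf_neq0 //; apply/prodf_neq0 => i ij.
  by rewrite subr_eq0 zi // eq_sym.
- rewrite dQ !(hornerXsubC, hornerD, hornerM, hornerC) -Rjz subrr; ring.
- rewrite dQ derivM derivC mul0r add0r derivD derivM derivXsubC mul1r !(hornerXsubC, hornerD, hornerM, hornerC) Rjd -Rjz subrr; ring.
Qed.
End S.

Unset Implicit Arguments.
Theorem lemma3p3 (R : realType) (N : nat) (a b : R) (z : 'I_N -> R) :
  (0 < N)%N -> 0 <= a -> 0 < b ->
  (forall i j : 'I_N, (i < j)%N -> z i < z j) ->
  (forall i, root (jacobi N (a + b - 1) (b - 1)) (z i)) ->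
  (forall i, -1 < z i < 1) ->
  v1 z != 0 /\
  Stilde a b z *m v1 z
    = (2 * (2 * N%:R + (a + b - 1) + (b - 1))) *: v1 z.
Proof.
move=> N0 a0 b0 zmono zroot zint.
have zi : forall i k, i != k -> z i != z k.
  move=> i k ne; case: (ltngtP i k) => h.
  - by rewrite lt_eqF // zmono.
  - by rewrite gt_eqF // zmono.
  - by move: ne; rewrite (val_inj h) eqxx.
have zlt : forall i, -1 < z i /\ z i < 1 by move=> i; have /andP[] := zint i.
pose al := a + b - 1; pose be := b - 1.
have Qnz : Qp N al be != 0.
  apply/negP => /eqP Q0.
  have h : 0 < cc N al be 0 * 2^+N.
    rewrite /cc subn0 gbinom0 mulr1 mulr_gt0 ?exprn_gt0 //.
    apply: gbinom_gt0; rewrite /al; lra.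
  by rewrite -Qp1 Q0 horner0 ltxx in h.
have Qr : forall i, root (Qp N al be) (z i).
  move=> i; have := zroot i; rewrite jacobiE rootZ //.
  by rewrite expf_neq0 // invr_eq0 pnatr_eq0.
split.
  apply/negP => /eqP h.
  have := congr1 (fun M : 'cV[R]_N => M (Ordinal N0) 0) h; rewrite !mxE => e.
  have [h1 h2] := zlt (Ordinal N0).
  have : 0 < 1 - z (Ordinal N0) ^+ 2 by nra.
  by rewrite -sqrtr_gt0 e ltxx.
apply/matrixP => j k; rewrite /Stilde /v1 !mxE.
under eq_bigr do rewrite !mxE.
set w := fun i => Num.sqrt (1 - z i ^+ 2).
have [hj1 hj2] := zlt j.
have wpos : forall i, 0 <= 1 - z i ^+ 2.
  by move=> i; have [h1 h2] := zlt i; nra.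
have [c [hcP [d1 d2]]] := stieltjes j Qnz (Qp_size N al be) Qr zi.
set P := \prod_(i < N | i != j) (z j - z i) in hcP d1 d2.
set S := \sum_(i < N | i != j) (z j - z i)^-1 in d2.
have ode := congr1 (horner^~ (z j)) (ODE N al be).
rewrite /Lop /= !(hu, hv, hornerM, hornerD, hornerN, hornerC) d1 d2 in ode.
rewrite (rootP (Qr j)) in ode.
have key : ((z j - 1) * (z j + 1)) * (c * P) * (- ((z j - 1) * (z j + 1)) * 2 * S - (b * (z j - 1) + (a + b) * (z j + 1))) = 0.
  by rewrite -[RHS]ode /al /be; ring.
have E : - ((z j - 1) * (z j + 1)) * 2 * S - (b * (z j - 1) + (a + b) * (z j + 1)) = 0.
  move: hcP; rewrite mulf_eq0 negb_or => /andP [cn Pn].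
  have n1 : (z j - 1 == 0) = false by apply: lt_eqF; lra.
  have n2 : (z j + 1 == 0) = false by apply: gt_eqF; lra.
  by move/eqP: key; rewrite !mulf_eq0 (negbTE cn) (negbTE Pn) n1 n2 /= => /eqP.
rewrite (bigD1 j) //= eqxx.
rewrite [X in _ + X = _](eq_bigr (fun i => -4 * Num.sqrt (1 - z j ^+ 2) * ((1 - z i ^+ 2) / (z j - z i) ^+ 2))); last first.
  move=> i ij; rewrite eq_sym (negbTE ij) sqrtrM //.
  have hs := sqr_sqrtr (wpos i).
  set s := Num.sqrt (1 - z i ^+ 2) in hs *.
  rewrite -hs; ring.
rewrite -[X in _ + X = _]mulr_sumr.
set T1 := \sum_(l < N | l != j) (1 - z j ^+ 2) / (z j - z l) ^+ 2.
set T2 := \sum_(i < N | i != j) (1 - z i ^+ 2) / (z j - z i) ^+ 2.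
have hT : T1 - T2 = (N%:R - 1) - 2 * z j * S.
  rewrite /T1 /T2 -sumrB.
  transitivity (\sum_(l < N | l != j) (1 - 2 * z j * (z j - z l)^-1)).
    apply: eq_bigr => l lj.
    have nz : z j - z l != 0 by rewrite subr_eq0 zi // eq_sym.
    field; exact: nz.
  rewrite sumrB -mulr_sumr.
  have h1 : \sum_(l < N) (1 : R) = N%:R by rewrite sumr_const card_ord.
  rewrite (bigD1 j) //= in h1.
  rewrite /S -h1; ring.
have hT1 : T1 = T2 + ((N%:R - 1) - 2 * z j * S) by rewrite -hT; ring.
have nz1 : z j - 1 != 0 by apply: ltr0_neq0; lra.
have nz2 : z j + 1 != 0 by apply: lt0r_neq0; lra.
have nz3 : 1 - z j != 0 by apply: lt0r_neq0; lra.
have nz4 : 1 + z j != 0 by apply: lt0r_neq0; lra.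
have nzk : - 2 * ((z j - 1) * (z j + 1)) != 0.
  by rewrite !mulf_neq0 // oppr_eq0 pnatr_eq0.
have hS : S = (b * (z j - 1) + (a + b) * (z j + 1)) / (- 2 * ((z j - 1) * (z j + 1))).
  apply: (mulIf nzk); rewrite divfK //.
  have : S * (- 2 * ((z j - 1) * (z j + 1))) - (b * (z j - 1) + (a + b) * (z j + 1)) = 0.
    by rewrite -E; ring.
  by move/eqP; rewrite subr_eq0 => /eqP.
rewrite hT1 hS.
field.
by rewrite nz1 nz3 nz4.
Qed.
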